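(* Let $(X,\kappa)$ be a finite digital image with simplicial Euler characteristic $\chi(X)\neq 0$, and let $f:X\to X$ be a continuous map strongly homotopic to the identity $\mathrm{id}_X$. Then $f$ has a fixed point or at least two approximate fixed points.
   Context: A digital image is a pair $(X,\kappa)$ where $X$ is a set and $\kappa$ is a symmetric irreflexive relation on $X$ (the adjacency). Write $x\leftrightarrow y$ if adjacent, $x\Leftrightarrow y$ if adjacent or equal. A map $f$ is continuous if $x\leftrightarrow y$ implies $f(x)\Leftrightarrow f(y)$. A point $x$ is an approximate fixed point of $f:X\to X$ if $f(x)\Leftrightarrow x$. The digital interval $[0,m]_{\mathbb Z}$ has consecutive integers adjacent. Continuous $f,g:X\to Y$ are strongly homotopic ($f\simeq^* g$) if there exist $m\ge1$ and $H:X\times[0,m]_{\mathbb Z}\to Y$ with $H(\cdot,0)=f$, $H(\cdot,m)=g$, such that whenever $(x,t)\neq(x',t')$, $x\Leftrightarrow x'$ and $|t-t'|\le1$, we have $H(x,t)\Leftrightarrow H(x',t')$. Simplicial homology: a $q$-simplex of $X$ is a set of $q+1$ pairwise adjacent points. $C_q(X)$ is the free abelian group generated by ordered $q$-simplices $\langle x_0,\dots,x_q\rangle$ modulo $\langle x_{\rho(0)},\dots,x_{\rho(q)}\rangle=\operatorname{sgn}(\rho)\langle x_0,\dots,x_q\rangle$, with boundary $\partial\langle x_0,\dots,x_q\rangle=\sum_{i=0}^q(-1)^i\langle x_0,\dots,\widehat{x_i},\dots,x_q\rangle$; $H_q(X)$ is its homology. The simplicial Euler characteristic is $\chi(X)=\sum_{q\ge0}(-1)^q\operatorname{rank}H_q(X)$.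 *)

(* Defs.v *)
From mathcomp Require Import all_boot all_order all_algebra.
Set Implicit Arguments. Unset Strict Implicit. Unset Printing Implicit Defensive.
Import GRing.Theory Num.Theory.
Local Open Scope ring_scope.

Section DigitalImage.
Variables (T : finType) (e : rel T).

Definition adjeq (x y : T) : bool := (x == y) || e x y.

Definition dcontinuous (f : T -> T) : Prop :=
  forall x y, e x y -> adjeq (f x) (f y).

(* strong homotopy from f to g (domain X x [0,m]_Z, time coordinate t <= m) *)
Definition strongly_homotopic (f g : T -> T) : Prop :=
  exists (m : nat) (H : T -> nat -> T),
    (1 <= m)%N /\
    (forall x, H x 0%N = f x) /\ (forall x, H x m = g x) /\
    (forall x x' t t', (t <= m)%N -> (t' <= m)%N ->
        (x, t) <> (x', t') -> adjeq x x' ->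
        (t <= t'.+1)%N -> (t' <= t.+1)%N ->
        adjeq (H x t) (H x' t')).

Definition approx_fixed (f : T -> T) (x : T) : bool := adjeq (f x) x.

Definition simplices (q : nat) : {set {set T}} :=
  [set S : {set T} | (#|S| == q.+1)%N &&
     [forall x in S, forall y in S, (x != y) ==> e x y]].

(* Each simplex is oriented by the order of the vertices given by enum_rank.
   Sign of the face of s obtained by deleting vertex x: (-1)^i, i = position of x. *)
Definition face_sign (s t : {set T}) : rat :=
  if [pick x in s :\: t] is Some x then
    (-1) ^+ #|[set y in s | (enum_rank y < enum_rank x)%N]|
  else 0.

(* matrix of the boundary map d_{q+1} : C_{q+1}(X) -> C_q(X) (acting on rows),
   rational coefficients *)
Definition bdry (q : nat) : 'M[rat]_(#|simplices q.+1|, #|simplices q|) :=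
  \matrix_(i, j) (let s : {set T} := enum_val i in let t : {set T} := enum_val j in
                   if t \subset s then face_sign s t else 0).

Definition rank_d (q : nat) : nat :=
  if q is q'.+1 then \rank (bdry q') else 0%N.

(* rank H_q(X) = dim ker d_q - dim im d_{q+1} (computed over Q) *)
Definition betti (q : nat) : int :=
  (#|simplices q|%:Z - (rank_d q)%:Z - (rank_d q.+1)%:Z)%R.

(* simplices have dimension < #|T|, so the sum is finite *)
Definition euler_char : int :=
  \sum_(q < #|T|.+1) (-1) ^+ q * betti q.

End DigitalImage.

(* Main.v *)
Require Import Defs.
From mathcomp Require Import all_boot all_order all_algebra ring.
Set Implicit Arguments. Unset Strict Implicit. Unset Printing Implicit Defensive.
Import GRing.Theory Num.Theory.
Local Open Scope ring_scope.

Section Chains.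
Variables (U : finType) (le : rel U).

Definition chainb (c : {set U}) :=
  [forall x in c, forall y in c, (x != y) ==> (le x y || le y x)].

Lemma chainP (c : {set U}) : reflect (forall x y, x \in c -> y \in c -> x != y -> le x y || le y x)
  (chainb c).
Proof.
apply: (iffP forallP) => [H x y xc yc | H x].
  by move: (H x); rewrite xc /= => /forallP /(_ y); rewrite yc /= => /implyP.
by apply/implyP => xc; apply/forallP => y; apply/implyP => yc; apply/implyP; apply: H.
Qed.

Definition psi (A : {set U}) : int :=
  \sum_(c : {set U} | (c \subset A) && chainb c) (-1) ^+ #|c|.

Definition lnk (A : {set U}) (x : U) :=
  [set y in A | (y != x) && (le x y || le y x)].

Lemma psi_remove (A : {set U}) x : x \in A -> psi A = psi (A :\ x) - psi (lnk A x).
Proof.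
move=> xA; rewrite /psi (bigID (fun c : {set U} => x \in c)) /= addrC.
congr (_ + _).
  by apply: eq_bigl => c; rewrite subsetD1 andbAC.
rewrite -sumrN.
rewrite (reindex_onto (fun c => x |: c) (fun c => c :\ x)); last first.
  by move=> c /andP[_ xc]; rewrite setD1K.
apply: eq_big => c.
  apply/idP/idP.
    move=> /andP[/andP[/andP[sA ch] _] /eqP E].
    have xnc : x \notin c by rewrite -E !inE eqxx.
    apply/andP; split.
      apply/subsetP => y yc; rewrite inE.
      have yx : y != x by apply: contraNneq xnc => <-.
      rewrite yx (subsetP sA) ?inE ?yc ?orbT //=.
      by move/chainP: ch; apply; rewrite 1?eq_sym ?yx // !inE ?eqxx ?yc ?orbT.
    apply/chainP => y z yc zc; move/chainP: ch; apply; by rewrite inE ?yc ?zc orbT.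
  move=> /andP[sL ch].
  have xnc : x \notin c by apply/negP => /(subsetP sL); rewrite inE eqxx /= andbF.
  have hL y : y \in c -> (y \in A) && (le x y || le y x).
    by move=> yc; move: (subsetP sL y yc); rewrite inE => /andP[-> /andP[_ ->]].
  rewrite !inE eqxx andbT; apply/andP; split; last first.
    by rewrite setU1K.
  apply/andP; split.
    apply/subsetP => y; rewrite !inE => /orP[/eqP -> // | yc].
    by case/andP: (hL y yc).
  apply/chainP => y z; rewrite !inE => /orP[/eqP -> | yc] /orP[/eqP -> | zc].
  - by rewrite eqxx.
  - by case/andP: (hL z zc).
  - by case/andP: (hL y yc) => _; rewrite orbC.
  - by move/chainP: ch; apply.
move=> /andP[_ /eqP E].
have xnc : x \notin c by rewrite -E !inE eqxx.
by rewrite cardsU1 xnc exprS mulN1r.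
Qed.

Lemma psi_cone (R : {set U}) m : m \in R -> (forall y, y \in R -> le y m) -> psi R = 0.
Proof.
move=> mR H; rewrite (psi_remove mR).
have -> : lnk R m = R :\ m.
  apply/setP => y; rewrite !inE; case yR: (y \in R); last by rewrite !andbF.
  by rewrite (H y yR) orbT !andbT.
by rewrite subrr.
Qed.

Lemma psi0 : psi set0 = 1.
Proof.
rewrite /psi (big_pred1 set0); first by rewrite cards0.
move=> c /=; rewrite subset0; have [->|] := eqVneq c set0; last by [].
by apply/chainP => x y; rewrite inE.
Qed.

End Chains.

Section Order.
Variables (U : finType) (le : rel U).
Hypothesis le_refl : forall x, le x x.
Hypothesis le_anti : forall x y, le x y -> le y x -> x = y.
Hypothesis le_trans : forall x y z, le x y -> le y z -> le x z.

Lemma exists_max (S : {set U}) u0 : u0 \in S ->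
  exists2 u, u \in S & forall b, b \in S -> le u b -> b = u.
Proof.
move=> u0S.
case: (@arg_maxnP _ u0 (mem S) (fun u => #|[set y in S | le y u]|) u0S) => u uS Hmax.
exists u => // b bS ub; apply/eqP/negPn/negP => nb.
have: (#|[set y in S | le y u]| < #|[set y in S | le y b]|)%N.
  apply: proper_card; apply/properP; split.
    apply/subsetP => y; rewrite !inE => /andP[-> yu] /=; exact: le_trans yu ub.
  exists b; rewrite !inE ?bS ?le_refl //=.
  by apply/negP => bu; move/negP: nb; apply; apply/eqP; apply: le_anti.
by move: (Hmax b bS); rewrite /= leqNgt => /negP.
Qed.

Lemma psi_join (D : {set U}) : psi le D = 0 -> forall n (B : {set U}), (#|B| <= n)%N ->
  (forall d b, d \in D -> b \in B -> le d b && (d != b)) -> psi le (D :|: B) = 0.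
Proof.
move=> pD; elim=> [|n IH] B.
  by rewrite leqn0 cards_eq0 => /eqP -> _; rewrite setU0.
move=> cB HB.
have [B0|] := eqVneq B set0; first by rewrite B0 setU0.
case/set0Pn => u0 u0B; case: (exists_max u0B) => u uB umax.
have uD : u \notin D by apply/negP => uD; move: (HB u u uD uB); rewrite eqxx andbF.
have uDB : u \in D :|: B by rewrite inE uB orbT.
rewrite (psi_remove le uDB).
have -> : (D :|: B) :\ u = D :|: (B :\ u).
  apply/setP => y; rewrite !inE; case: eqVneq => [->|] //=.
  by rewrite (negbTE uD).
have -> : lnk le (D :|: B) u = D :|: [set b in B | (b != u) && le b u].
  apply/setP => y; rewrite !inE; case yD: (y \in D) => /=.
    by case/andP: (HB y u yD uB) => -> /=; rewrite eq_sym => ->; rewrite orbT.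
  case yB: (y \in B) => //=; case yu: (y == u) => //=.
  case uy: (le u y) => //=.
  by move: (umax y yB uy); move/eqP; rewrite yu.
have cBu : (#|B :\ u| <= n)%N.
  by rewrite -ltnS; apply: leq_trans cB; rewrite (cardsD1 u B) uB.
rewrite (IH (B :\ u)) // ?(IH [set b in B | (b != u) && le b u]) ?subrr //.
- apply: leq_trans _ cBu; apply: subset_leq_card; apply/subsetP => y.
  by rewrite !inE => /andP[-> /andP[-> _]].
- move=> d b dD; rewrite inE => /andP[bB _]; exact: HB.
- move=> d b dD; rewrite inE => /andP[_ bB]; exact: HB.
Qed.

Definition fixs (A : {set U}) (f : U -> U) := [set x in A | f x == x].

Lemma lemC n : forall (A : {set U}) (f : U -> U), (#|A| <= n)%N ->
  (forall x, x \in A -> f x \in A) ->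
  (forall x y, x \in A -> y \in A -> le x y -> le (f x) (f y)) ->
  (forall x, x \in A -> le (f x) x) ->
  psi le A = psi le (fixs A f).
Proof.
elim: n => [|n IH] A f.
  rewrite leqn0 cards_eq0 => /eqP -> *.
  by congr psi; apply/setP => x; rewrite !inE.
move=> cA fA fm fle.
have [NF0|] := eqVneq [set x in A | f x != x] set0.
  congr psi; apply/setP => x; rewrite !inE.
  case xA: (x \in A) => //=; apply/esym/negPn/negP => nx.
  by move: NF0 => /setP /(_ x); rewrite !inE xA nx.
case/set0Pn => x0 x0N; case: (exists_max x0N) => x; rewrite inE => /andP[xA xnf] xmax.
have IHs (S : {set U}) : S \subset A -> x \notin S ->
    (forall y, y \in S -> f y \in S) -> psi le S = psi le (fixs S f).
  move=> sSA xS fS; apply: IH fS _ _.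
  - rewrite -ltnS; apply: leq_trans cA; apply: proper_card; apply/properP; split => //.
    by exists x.
  - by move=> y z yS zS; apply: fm; apply: (subsetP sSA).
  - by move=> y yS; apply: fle; apply: (subsetP sSA).
rewrite (psi_remove le xA).
have fixE : fixs A f = fixs (A :\ x) f.
  apply/setP => y; rewrite !inE; case: (eqVneq y x) => [->|] //=.
  by rewrite (negbTE xnf) andbF.
rewrite fixE -IHs ?setD1K ?subsetDl ?setD1E ?inE ?eqxx //; last first.
  move=> y; rewrite !inE => /andP[yx yA]; rewrite fA // andbT.
  apply/eqP => fyx.
  have yx' : y = x.
    apply: xmax; first by rewrite inE yA /= fyx eq_sym.
    by rewrite -fyx fle.
  by move: yx; rewrite yx' eqxx.
set D := [set y in A | (y != x) && le y x].
set Up := [set y in A | (y != x) && le x y].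
have DA : D \subset A by apply/subsetP => y; rewrite inE => /andP[].
have xD : x \notin D by rewrite inE eqxx andbF.
have fD : forall y, y \in D -> f y \in D.
  move=> y; rewrite inE => /andP[yA /andP[yx lyx]].
  have lfy := fle y yA.
  rewrite inE fA //= (le_trans lfy lyx) andbT.
  apply/eqP => fyx; move: yx; rewrite (le_anti lyx) ?eqxx //.
  by rewrite -fyx.
have fx_ne : f x != x by [].
set R := [set y in D | le y (f x)].
have RD : R \subset D by apply/subsetP => y; rewrite inE => /andP[].
have RA : R \subset A := subset_trans RD DA.
have fxD : f x \in D by rewrite inE fA //= fx_ne fle.
have fR : forall y, y \in R -> f y \in R.
  move=> y; rewrite inE => /andP[yD lyfx]; rewrite inE fD //=.
  apply: le_trans (fle _ (subsetP DA _ yD)) lyfx.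
have pD : psi le D = 0.
  rewrite IHs //.
  have -> : fixs D f = fixs R f.
    apply/setP => y; rewrite inE [in RHS]inE.
    case: (eqVneq (f y) y) => [fyy|]; rewrite ?andbF ?andbT //.
    rewrite /R inE; case yD: (y \in D) => //=.
    suff: le (f y) (f x) by rewrite fyy.
    apply: fm; rewrite ?xA ?(subsetP DA) //.
    by move: yD; rewrite inE => /andP[_ /andP[]].
  rewrite -IHs //; last by apply: contraNN xD; apply: (subsetP RD).
  apply: (psi_cone (m := f x)); first by rewrite inE fxD le_refl.
  by move=> y; rewrite inE => /andP[].
have -> : lnk le A x = D :|: Up.
  apply/setP => y; rewrite !inE.
  case: (y \in A) => //=; case: (y != x) => //=; by rewrite orbC.
rewrite (psi_join pD (leqnn #|Up|)) ?subr0 //.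
move=> d b; rewrite !inE => /andP[_ /andP[dx ldx]] /andP[_ /andP[bx lxb]].
rewrite (le_trans ldx lxb) /=; apply/eqP => db; move: dx.
by rewrite db (le_anti lxb) ?eqxx // -db.
Qed.

End Order.

Section Iso.
Variables (U : finType) (le : rel U).

Lemma imset_inv (A : {set U}) (r s : U -> U) (c : {set U}) :
  (forall x, x \in A -> s (r x) = x) -> c \subset A -> s @: (r @: c) = c.
Proof.
move=> H sc; rewrite -imset_comp (eq_in_imset (g := id)) ?imset_id //.
by move=> x xc /=; apply: H; apply: (subsetP sc).
Qed.

Lemma psi_iso (A B : {set U}) (r s : U -> U) :
 (forall x, x \in A -> r x \in B /\ s (r x) = x) ->
 (forall y, y \in B -> s y \in A /\ r (s y) = y) ->
 (forall x y, x \in A -> y \in A -> le x y -> le (r x) (r y)) ->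
 (forall x y, x \in B -> y \in B -> le x y -> le (s x) (s y)) ->
 psi le A = psi le B.
Proof.
move=> HA HB mr ms; rewrite /psi.
rewrite (reindex_onto (fun c : {set U} => s @: c) (fun c : {set U} => r @: c)); last first.
  by move=> c /andP[sc _]; apply: imset_inv sc => x xA; case: (HA x xA).
apply: eq_big => c.
  apply/idP/idP.
    move=> /andP[/andP[sA ch] /eqP E].
    have sB : c \subset B.
      rewrite -E; apply/subsetP => y /imsetP[x xc ->].
      by case: (HA x (subsetP sA x xc)).
    rewrite sB /=; apply/chainP => y z yc zc yz.
    have ysc : s y \in s @: c by apply: imset_f.
    have zsc : s z \in s @: c by apply: imset_f.
    have := HB y (subsetP sB y yc); have := HB z (subsetP sB z zc).
    case=> zA rz [yA ry].
    have syz : s y != s z by apply: contra yz => /eqP e; rewrite -ry -rz e.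
    case/orP: (chainP _ _ ch (s y) (s z) ysc zsc syz) => h.
      by rewrite -ry -rz (mr _ _ yA zA h).
    by rewrite -ry -rz (mr _ _ zA yA h) orbT.
  move=> /andP[sB ch].
  have sA : s @: c \subset A.
    by apply/subsetP => y /imsetP[x xc ->]; case: (HB x (subsetP sB x xc)).
  rewrite sA (@imset_inv B s r c) ?eqxx //=; last by move=> y yB; case: (HB y yB).
  rewrite andbT; apply/chainP => y z /imsetP[y' yc ->] /imsetP[z' zc ->] yz.
  have yz' : y' != z' by apply: contra yz => /eqP ->.
  case/orP: (chainP _ _ ch y' z' yc zc yz') => h.
    by rewrite (ms _ _ (subsetP sB _ yc) (subsetP sB _ zc) h).
  by rewrite (ms _ _ (subsetP sB _ zc) (subsetP sB _ yc) h) orbT.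
move=> /andP[/andP[sA _] /eqP E].
rewrite card_in_imset //.
have sB : c \subset B.
  rewrite -E; apply/subsetP => y /imsetP[x xc ->].
  by case: (HA x (subsetP sA x xc)).
move=> y z yc zc /= e.
case: (HB y (subsetP sB y yc)) => _ <-; case: (HB z (subsetP sB z zc)) => _ <-.
by rewrite e.
Qed.

End Iso.

Section Sets.
Variable T : finType.
Definition sub := fun a b : {set T} => a \subset b.
Definition sup := fun a b : {set T} => b \subset a.

Lemma sub_refl : forall x, sub x x. Proof. by move=> x; apply: subxx. Qed.
Lemma sub_anti : forall x y, sub x y -> sub y x -> x = y.
Proof. by move=> x y a b; apply/eqP; rewrite eqEsubset; apply/andP. Qed.
Lemma sub_trans : forall x y z, sub x y -> sub y z -> sub x z.
Proof. by move=> x y z; apply: subset_trans. Qed.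
Lemma sup_refl : forall x, sup x x. Proof. by move=> x; apply: subxx. Qed.
Lemma sup_anti : forall x y, sup x y -> sup y x -> x = y.
Proof. by move=> x y a b; apply/eqP; rewrite eqEsubset; apply/andP. Qed.
Lemma sup_trans : forall x y z, sup x y -> sup y z -> sup x z.
Proof. by move=> x y z a b; apply: subset_trans b a. Qed.

Lemma psi_sup (A : {set {set T}}) : psi sup A = psi sub A.
Proof.
apply: eq_bigl => c; congr (_ && _).
apply/chainP/chainP => H x y xc yc xy; rewrite orbC; exact: H.
Qed.

Lemma alt_sum (s : {set T}) : s != set0 ->
  \sum_(t : {set T} | t \subset s) (-1) ^+ #|t| = 0 :> int.
Proof.
case/set0Pn => z zs.
transitivity (psi (fun _ _ => true) s); last first.
  exact: (@psi_cone _ (fun _ _ => true) s z zs (fun _ _ => erefl)).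
apply: eq_bigl => c.
suff -> : chainb (fun _ _ => true) c by rewrite andbT.
by apply/chainP => *; rewrite orbT.
Qed.

Definition sg (P : {set {set T}}) : int := \sum_(s in P) (-1) ^+ (#|s|.+1).

Lemma psi_cx n : forall (P : {set {set T}}), (#|P| <= n)%N -> set0 \notin P ->
  (forall s t : {set T}, s \in P -> t \subset s -> t != set0 -> t \in P) ->
  psi sub P = 1 - sg P.
Proof.
elim: n => [|n IH] P.
  rewrite leqn0 cards_eq0 => /eqP -> *.
  by rewrite psi0 /sg big_set0 subr0.
move=> cP P0 Pd.
have [->|] := eqVneq P set0; first by rewrite psi0 /sg big_set0 subr0.
case/set0Pn => s0 s0P.
case: (exists_max sub_refl sub_anti sub_trans s0P) => s sP smax.
have sne : s != set0 by apply: contraNneq P0 => <-.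
rewrite (psi_remove sub sP).
set L := [set t : {set T} | (t \subset s) && (t != s) && (t != set0)].
have -> : lnk sub P s = L.
  apply/setP => t; rewrite !inE /sub.
  case: (eqVneq t s) => [->|ts] //=; first by rewrite !andbF.
  case ts': (s \subset t).
    have -> : (t \subset s) = false.
      by apply/negP => st; move: ts; rewrite (sub_anti st ts') eqxx.
    case tP: (t \in P) => //=.
    by move: ts; rewrite (smax t tP ts') eqxx.
  rewrite orFb andbT.
  case st: (t \subset s) => /=; last by rewrite andbF.
  case: (eqVneq t set0) => [->|t0]; first by rewrite (negbTE P0).
  by rewrite (Pd s t sP st t0).
have cPs : (#|P :\ s| <= n)%N by rewrite -ltnS; apply: leq_trans cP; rewrite (cardsD1 s P) sP.
rewrite (IH (P :\ s)) //; last 2 first.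
- by rewrite inE negb_and P0 orbT.
- move=> a t; rewrite !inE => /andP[aS aP] ta t0; rewrite (Pd a t) // andbT.
  apply: contraNneq aS => tse; apply/eqP; apply: smax => //.
  by rewrite /sub -tse.
have cL : (#|L| <= n)%N.
  apply: leq_trans cPs; apply: subset_leq_card; apply/subsetP => t.
  rewrite !inE => /andP[/andP[st ts] t0]; rewrite ts /=; exact: Pd st t0.
rewrite (IH L) //; last 2 first.
- by rewrite inE eqxx andbF.
- move=> a t; rewrite !inE => /andP[/andP[as_ an] _] ta t0.
  rewrite t0 andbT (subset_trans ta as_) /=.
  apply/negP => /eqP tse; move: as_; rewrite -tse => sa.
  by move: an; rewrite (sub_anti sa ta) tse eqxx.
have hP : sg P = sg (P :\ s) - (-1) ^+ #|s|.
  rewrite /sg (bigD1 s sP) /= exprS mulN1r addrC; congr (_ - _).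
  by apply: eq_bigl => t; rewrite !inE andbC.
have hL : sg L = 1 + (-1) ^+ #|s|.
  have := alt_sum sne.
  rewrite (bigD1 s) //= (bigD1 set0) /=; last by rewrite sub0set eq_sym sne.
  rewrite cards0 expr0.
  have -> : \sum_(i : {set T} | (i \subset s) && (i != s) && (i != set0)) (-1) ^+ #|i| =
      - sg L :> int.
    rewrite /sg -sumrN; apply: eq_big => [t|t _]; first by rewrite !inE.
    by rewrite exprS mulN1r opprK.
  move=> H; have H0 : (-1) ^+ #|s| + (1 - sg L) = 0%R by exact: H.
  rewrite -(addr0 (sg L)) -H0; move: (sg L) ((-1) ^+ #|s|) => a b; ring.
rewrite hP hL; clearbody L; move: (sg (P :\ s)) => a; move: ((-1) ^+ #|s|) => b; ring.
Qed.
End Sets.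

Section Iter.
Variable T : finType.

Lemma iter_homo (g : {set T} -> {set T}) k :
  {homo g : a b / a \subset b} -> {homo iter k g : a b / a \subset b}.
Proof. by move=> hg; elim: k => //= k IH a b ab; apply: hg; apply: IH. Qed.

Lemma iter_inc (g : {set T} -> {set T}) (x : {set T}) : {homo g : a b / a \subset b} ->
  x \subset g x -> forall k, iter k g x \subset iter k.+1 g x.
Proof. by move=> hg xg; elim=> //= k IH; apply: hg. Qed.

Lemma iter_dec (g : {set T} -> {set T}) (x : {set T}) : {homo g : a b / a \subset b} ->
  g x \subset x -> forall k, iter k.+1 g x \subset iter k g x.
Proof. by move=> hg xg; elim=> //= k IH; apply: hg. Qed.

Lemma iter_fix_inc (g : {set T} -> {set T}) (x : {set T}) : {homo g : a b / a \subset b} ->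
  x \subset g x -> g (iter #|T|.+1 g x) = iter #|T|.+1 g x.
Proof.
move=> hg xg.
have H n : (g (iter n g x) == iter n g x) || (n <= #|iter n g x|)%N.
  elim: n => [|n IH]; first by rewrite orbT.
  have [e|ne] := eqVneq (g (iter n g x)) (iter n g x).
    by rewrite /= e e eqxx.
  case/orP: IH => [/eqP e|le]; first by rewrite e eqxx in ne.
  apply/orP; right; apply: leq_ltn_trans le _; apply: proper_card.
  by rewrite properEneq eq_sym ne iter_inc.
apply/eqP; case/orP: (H #|T|.+1) => // h.
by have := leq_trans h (max_card _); rewrite ltnn.
Qed.

Lemma iter_fix_dec (g : {set T} -> {set T}) (x : {set T}) : {homo g : a b / a \subset b} ->
  g x \subset x -> g (iter #|T|.+1 g x) = iter #|T|.+1 g x.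
Proof.
move=> hg xg.
have H n : (g (iter n g x) == iter n g x) || (n + #|iter n g x| <= #|T|)%N.
  elim: n => [|n IH]; first by rewrite add0n max_card orbT.
  have [e|ne] := eqVneq (g (iter n g x)) (iter n g x).
    by rewrite /= e e eqxx.
  case/orP: IH => [/eqP e|le]; first by rewrite e eqxx in ne.
  apply/orP; right; apply: leq_trans le; rewrite addSn -addnS leq_add2l.
  apply: proper_card.
  by rewrite properEneq ne iter_dec.
apply/eqP; case/orP: (H #|T|.+1) => // h.
by have := leq_trans (leq_addr _ _) h; rewrite ltnn.
Qed.

Lemma iter_fixed (g : {set T} -> {set T}) (x : {set T}) k : g x = x -> iter k g x = x.
Proof. by move=> gx; elim: k => //= k ->. Qed.

Lemma iter_in (P : {set {set T}}) (g : {set T} -> {set T}) (x : {set T}) k :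
  (forall a, a \in P -> g a \in P) -> x \in P -> iter k g x \in P.
Proof. by move=> gP xP; elim: k => //= k IH; apply: gP. Qed.

Lemma lemE (P : {set {set T}}) (f g : {set T} -> {set T}) :
  (forall a, a \in P -> f a \in P) -> (forall a, a \in P -> g a \in P) ->
  {homo f : a b / a \subset b} -> {homo g : a b / a \subset b} ->
  (forall a, f a \subset g a) ->
  psi (@sub T) (fixs P f) = psi (@sub T) (fixs P g).
Proof.
move=> fP gP hf hg fg.
set N := #|T|.+1.
set r := iter N g; set s := iter N f.
set A := fixs P f; set B := fixs P g.
have hr : {homo r : a b / a \subset b} by apply: iter_homo.
have hs : {homo s : a b / a \subset b} by apply: iter_homo.
have HA a : a \in A -> [/\ r a \in B, a \subset r a & s a = a].
  rewrite inE => /andP[aP /eqP fa].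
  have ag : a \subset g a by rewrite -{1}fa.
  split.
  - by rewrite inE iter_in //= iter_fix_inc.
  - have: forall k, a \subset iter k g a.
      elim=> // k IH; apply: subset_trans IH (iter_inc hg ag k).
    by apply.
  - exact: iter_fixed.
have HB b : b \in B -> [/\ s b \in A, s b \subset b & r b = b].
  rewrite inE => /andP[bP /eqP gb].
  have bf : f b \subset b by rewrite -{2}gb.
  split.
  - by rewrite inE iter_in //= iter_fix_dec.
  - have: forall k, iter k f b \subset b.
      elim=> // k IH; apply: subset_trans (iter_dec hf bf k) IH.
    by apply.
  - exact: iter_fixed.
have AP : A \subset P by apply/subsetP => a; rewrite inE => /andP[].
have BP : B \subset P by apply/subsetP => a; rewrite inE => /andP[].
rewrite -psi_sup.
rewrite (@lemC _ _ (@sup_refl T) (@sup_anti T) (@sup_trans T) #|A| A (s \o r)) //; first last.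
- by move=> a aA; case: (HA a aA) => _ ar sa; rewrite /sup /= -{1}sa hs.
- by move=> a b _ _; rewrite /sup /= => ba; apply: hs; apply: hr.
- by move=> a aA /=; case: (HA a aA) => rB _ _; case: (HB _ rB).
rewrite (@lemC _ _ (@sub_refl T) (@sub_anti T) (@sub_trans T) #|B| B (r \o s)) //; first last.
- by move=> b bB; case: (HB b bB) => _ sb rb; rewrite /sub /= -{2}rb hr.
- by move=> a b _ _; rewrite /sub /= => ba; apply: hr; apply: hs.
- by move=> b bB /=; case: (HB b bB) => sA _ _; case: (HA _ sA).
rewrite psi_sup.
apply: (@psi_iso _ _ _ _ r s).
- move=> a; rewrite inE /= => /andP[aA /eqP e]; split; last by [].
  case: (HA a aA) => rB _ _; by rewrite inE rB /= e.
- move=> b; rewrite inE /= => /andP[bB /eqP e]; split; last by [].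
  case: (HB b bB) => sA _ _; by rewrite inE sA /= e.
- by move=> a b _ _; apply: hr.
- by move=> a b _ _; apply: hs.
Qed.

End Iter.

Section Digital.
Variables (T : finType) (e : rel T).
Hypothesis e_sym : symmetric e.
Hypothesis e_irr : irreflexive e.

Definition cliqueb (s : {set T}) := [forall x in s, forall y in s, (x != y) ==> e x y].
Definition Cl := [set s : {set T} | (s != set0) && cliqueb s].

Lemma cliqueP (s : {set T}) :
  reflect (forall x y, x \in s -> y \in s -> adjeq e x y) (cliqueb s).
Proof.
apply: (iffP forallP) => [H x y xs ys | H x].
  move: (H x); rewrite xs /= => /forallP /(_ y); rewrite ys /= => /implyP.
  rewrite /adjeq; case: eqVneq => //= _; exact.
apply/implyP => xs; apply/forallP => y; apply/implyP => ys; apply/implyP => xy.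
by move: (H x y xs ys); rewrite /adjeq (negbTE xy).
Qed.

Lemma tele (r : nat -> int) n :
  \sum_(q < n.+1) (-1) ^+ q * (r q + r q.+1) = r 0%N + (-1) ^+ n * r n.+1.
Proof.
elim: n => [|n IH]; first by rewrite big_ord_recr big_ord0 /= add0r expr0 !mul1r.
rewrite big_ord_recr /= IH exprS.
move: (r 0%N) (r n.+1) (r n.+2) ((-1) ^+ n : int) => a b c d; ring.
Qed.

Lemma simplices_big : simplices e #|T|.+1 = set0.
Proof.
apply/setP => s; rewrite !inE; apply/negP => /andP[/eqP c _].
have := max_card (mem s); rewrite -/(#|s|) c; by rewrite ltnNge ltnW.
Qed.

Lemma euler_sum : euler_char e = \sum_(q < #|T|.+1) (-1) ^+ q * (#|simplices e q|)%:Z.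
Proof.
rewrite /euler_char /betti.
have -> : \sum_(q < #|T|.+1) (-1) ^+ q * ((#|simplices e q|)%:Z - (rank_d e q)%:Z - (rank_d e q.+1)%:Z)
  = \sum_(q < #|T|.+1) (-1) ^+ q * (#|simplices e q|)%:Z -
    \sum_(q < #|T|.+1) (-1) ^+ q * ((rank_d e q)%:Z + (rank_d e q.+1)%:Z).
  rewrite -sumrB; apply: eq_bigr => q _; rewrite -mulrBr; congr (_ * _).
  by rewrite opprD addrA.
rewrite (tele (fun q => (rank_d e q)%:Z)) /=.
have -> : \rank (bdry e #|T|) = 0%N.
  apply/eqP; rewrite -leqn0.
  apply: leq_trans (rank_leq_row _) _.
  by rewrite simplices_big cards0.
by rewrite mulr0 addr0.
Qed.

Lemma euler_sg : euler_char e = sg Cl.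
Proof.
rewrite euler_sum /sg.
rewrite (partition_big (fun s : {set T} => (inord (#|s|.-1) : 'I_#|T|.+1)) xpredT) //=.
apply: eq_bigr => q _.
rewrite (eq_bigl (fun s => s \in simplices e q)); last first.
  move=> s; rewrite !inE /cliqueb.
  case: (eqVneq s set0) => [->|sn] /=; first by rewrite cards0.
  have s0 : (0 < #|s|)%N by rewrite card_gt0.
  have -> : (inord (#|s|.-1) == q) = (#|s| == q.+1).
    rewrite -val_eqE /= inordK; last by apply: leq_ltn_trans (leq_pred _) _; rewrite ltnS; exact: max_card.
    by rewrite -eqSS prednK.
  by rewrite andbC.
rewrite (eq_bigr (fun _ => (-1) ^+ q)); last first.
  move=> s; rewrite inE => /andP[/eqP -> _].
  by rewrite !exprS mulrA mulrNN !mul1r.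
by rewrite sumr_const -mulr_natr natz.
Qed.

Lemma psi_Cl : psi (@sub T) Cl = 1 - sg Cl.
Proof.
apply: (@psi_cx _ #|Cl|) => //; first by rewrite inE eqxx.
move=> s t; rewrite !inE => /andP[_ /cliqueP cs] ts -> /=.
by apply/cliqueP => x y xt yt; apply: cs; apply: (subsetP ts).
Qed.

Lemma Cl_of (S : {set T}) : S != set0 ->
  (forall u v, u \in S -> v \in S -> adjeq e u v) -> S \in Cl.
Proof. by move=> S0 H; rewrite inE S0 /=; apply/cliqueP. Qed.

Lemma Cl_adj s x y : s \in Cl -> x \in s -> y \in s -> adjeq e x y.
Proof. by rewrite inE => /andP[_ /cliqueP H]; apply: H. Qed.

Lemma Cl_ne s : s \in Cl -> s != set0.
Proof. by rewrite inE => /andP[]. Qed.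

End Digital.

Local Close Scope ring_scope.
Unset Implicit Arguments.

Theorem theorem3p6 (T : finType) (e : rel T)
  (e_sym : symmetric e) (e_irr : irreflexive e)
  (hchi : euler_char e <> 0%R)
  (f : T -> T) (f_cont : dcontinuous e f)
  (f_htp : strongly_homotopic e f id) :
  (exists x, f x = x) \/
  (exists x y, x <> y /\ approx_fixed e f x /\ approx_fixed e f y).
Proof.
case: (pickP (approx_fixed e f)) => [x ax | nax]; last first.
  exfalso; apply: hchi.
  case: f_htp => m [H [m1 [H0 [Hm Hc]]]].
  pose a t := fun s : {set T} => [set H x t | x in s].
  pose b t := fun s : {set T} => a t s :|: a t.+1 s.
  have adjH : forall x y t t', t <= m -> t' <= m -> t <= t'.+1 -> t' <= t.+1 ->
      adjeq e x y -> adjeq e (H x t) (H y t').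
    move=> x y t t' tm t'm h1 h2 xy.
    case: (eqVneq (x, t) (y, t')) => [[-> ->]|ne]; first by rewrite /adjeq eqxx.
    by apply: Hc => //; apply/eqP.
  have aCl : forall t, t <= m -> forall s, s \in Cl e -> a t s \in Cl e.
    move=> t tm s sC; apply: Cl_of.
      case/set0Pn: (Cl_ne sC) => x xs; apply/set0Pn; exists (H x t).
      by apply: imset_f.
    move=> u v /imsetP[x xs ->] /imsetP[y ys ->]; apply: adjH => //.
    exact: Cl_adj sC xs ys.
  have bCl : forall t, t < m -> forall s, s \in Cl e -> b t s \in Cl e.
    move=> t tm s sC; apply: Cl_of.
      case/set0Pn: (Cl_ne sC) => x xs; apply/set0Pn; exists (H x t).
      by rewrite inE imset_f.
    have tm' : t <= m by apply: ltnW.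
    move=> u v; rewrite !inE.
    have l1 : t <= t.+1 by apply: leqnSn.
    have l2 : t.+1 <= t.+2 by apply: leqnSn.
    have l3 : t <= t.+2 by apply: leqW.
    have xy : forall x y, x \in s -> y \in s -> adjeq e x y.
      by move=> x y; apply: Cl_adj.
    by case/orP => /imsetP[x xs ->]; case/orP => /imsetP[y ys ->];
      apply: adjH => //; apply: xy.
  have ah : forall t, {homo a t : s1 s2 / s1 \subset s2}.
    by move=> t s1 s2; apply: imsetS.
  have bh : forall t, {homo b t : s1 s2 / s1 \subset s2}.
    by move=> t s1 s2 h; apply: setUSS; apply: imsetS.
  have step : forall t, t < m ->
      psi (@sub T) (fixs (Cl e) (a t)) = psi (@sub T) (fixs (Cl e) (a t.+1)).
    move=> t tm.
    have tm' : t <= m by apply: ltnW.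
    rewrite (@lemE _ _ (a t) (b t) (aCl t tm') (bCl t tm) (ah t) (bh t)
                   (fun s => subsetUl _ _)).
    by rewrite (@lemE _ _ (a t.+1) (b t) (aCl t.+1 tm) (bCl t tm) (ah t.+1) (bh t)
                   (fun s => subsetUr _ _)).
  have all : forall t, t <= m ->
      psi (@sub T) (fixs (Cl e) (a 0)) = psi (@sub T) (fixs (Cl e) (a t)).
    elim => // t IH tm; rewrite IH ?(step t tm) //; exact: ltnW.
  have am : fixs (Cl e) (a m) = Cl e.
    apply/setP => s; rewrite inE.
    have -> : a m s = s by rewrite /a (eq_imset _ Hm) imset_id.
    by rewrite eqxx andbT.
  have a0 : fixs (Cl e) (a 0) = set0.
    apply/setP => s; rewrite inE [in RHS]inE; apply/negP => /andP[sC /eqP fs].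
    case/set0Pn: (Cl_ne sC) => x xs.
    have : H x 0 \in a 0 s by apply: imset_f.
    rewrite fs H0 => fxs.
    by move: (nax x); rewrite /approx_fixed (Cl_adj sC fxs xs).
  have := all m (leqnn m); rewrite am a0 psi0 psi_Cl => /eqP.
  rewrite euler_sg => /eqP h.
  have -> : sg (Cl e) = (1 - (1 - sg (Cl e)))%R by move: (sg _) => z; ring.
  by rewrite -h subrr.
case: (eqVneq (f x) x) => [fx|fx]; first by left; exists x.
right; exists x, (f x); split; first by apply/eqP; rewrite eq_sym.
split => //; rewrite /approx_fixed; apply: f_cont.
by move: ax; rewrite /approx_fixed /adjeq (negbTE fx).
Qed.
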